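(* Let $L,R,M\in\mathbb{N}$, let $\mathcal{X}$ be any set and $\Phi\subseteq\{0,1\}^{\mathcal{X}}$ any set of features closed under negation, and let $\mathcal{T}$ be the relaxed component model teacher class (defined in the context) for these parameters. Let $H=\{(x_0,0)\}$ for some $x_0\in\mathcal{X}$ such that $\mathcal{T}$ is consistent with $H$. Then $\mathrm{DFFdim}(\mathcal{T},H)\leq RM$.
   Context: Setting. $\mathcal{X}$ is a set of examples, $\mathcal{Y}$ a finite set of labels, and $\Phi$ a set of Boolean features $\phi:\mathcal{X}\to\{0,1\}$; $\bot$ denotes a null symbol not in $\mathcal{X}\cup\mathcal{Y}\cup\Phi$. A teacher over $\mathcal{X},\mathcal{Y},\Phi$ is a pair $T=(\ell,\psi)$ with $\ell:\mathcal{X}\to\mathcal{Y}$ and $\psi:\mathcal{X}\times\mathcal{X}\to\Phi\cup\{\bot\}$ such that whenever $\ell(x)\neq\ell(\hat x)$, $\phi:=\psi(x,\hat x)\in\Phi$, $\phi(x)=1$ and $\phi(\hat x)=0$. A teacher class is a set of teachers. A history is a non-empty set $H\subseteq\mathcal{X}\times\mathcal{Y}$; a teacher $(\ell,\psi)$ is consistent with $H$ if $\ell(x)=y$ for all $(x,y)\in H$; $\mathcal{T}_H$ is the set of teachers in $\mathcal{T}$ consistent with $H$, and $\mathcal{T}$ is consistent with $H$ if $\mathcal{T}_H\neq\emptyset$. DFF dimension. A DFF tree is a rooted tree whose nodes are triples $\langle y,\phi,x\rangle$ with $y\in\mathcal{Y}\cup\{\bot\}$, $\phi\in\Phi\cup\{\bot\}$,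 $x\in\mathcal{X}\cup\{\bot\}$, such that the root has $y=\phi=\bot$, a node has $x=\bot$ iff it is a leaf, every edge is labeled by a pair $(\hat x,\hat y)\in\mathcal{X}\times\mathcal{Y}$, and every non-root node $\langle y,\phi,x\rangle$ with incoming edge $(\hat x,\hat y)$ has $\phi\neq\bot$ whenever $y\neq\hat y$. For a parent–child pair $\langle\cdot,\cdot,x\rangle\xrightarrow{(\hat x,\hat y)}\langle y,\phi,\cdot\rangle$ on a path, $(x,y)$ is called a labeled example in that path. A path from the root is consistent with a teacher $(\ell,\psi)$ if for every such parent–child pair on it, $\ell(x)=y$ and, if $y\neq\hat y$, $\psi(x,\hat x)=\phi$. Given $\mathcal{T}$ consistent with $H$, a DFF tree is shattered by $\mathcal{T}$ and $H$ if: (1) every non-root node $\langle y,\phi,x\rangle$ with incoming edge $(\hat x,\hat y)$ has $y\neq\hat y$; (2) the labels of the outgoing edges of each non-leaf node $v$ are exactly the pairs that belong to $H$ or are labeled examples in the path from the root to $v$; (3) every root-to-leaf path is consistent with some teacher in $\mathcal{T}_H$; (4) all root-to-leaf paths have the same number of edges, called the height. $\mathrm{DFFdim}(\mathcal{T},H)$ is the maximal height of a DFF tree shattered by $\mathcal{T}$ and $H$. Relaxed component model. Let $\mathcal{Y}=\{0,1,\dots,L\}$. For $S\subseteq\Phi$ write $S(x)=\prod_{\phi\in S}\phi(x)$. For a collection $\mathcal{S}=\{S_1,\dots,S_R\}$ of (at most $R$) subsets of $\Phi$, each of size at most $M$, and $q:[R]\to[L]$, define $\ell_{\mathcal{S},q}(x)=q(j)$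 if $S_j(x)=1$, and $\ell_{\mathcal{S},q}(x)=0$ if no $j$ has $S_j(x)=1$; $\ell_{\mathcal{S},q}$ is defined only if for every $x$ all $j$ with $S_j(x)=1$ give the same $q(j)$. Let $\mathcal{L}$ be the set of pairs $(\mathcal{S},q)$ for which $\ell_{\mathcal{S},q}$ is defined. Let $F(x)=\{\phi\in\Phi:\phi(x)=1\}$ and $\neg A=\{\neg\phi:\phi\in A\}$. $\mathcal{T}_{\mathcal{S},q}$ is the set of all teachers $(\ell_{\mathcal{S},q},\psi)$ for which there is a map $x\mapsto S(x)\in\mathcal{S}$, defined on all $x$ with $\ell_{\mathcal{S},q}(x)\neq0$, with $S(x)=S_j$ for some $j$ satisfying $S_j(x)=1$ and $q(j)=\ell_{\mathcal{S},q}(x)$, such that for all $x,\hat x$ with $\ell_{\mathcal{S},q}(x)\neq\ell_{\mathcal{S},q}(\hat x)$: if $\ell_{\mathcal{S},q}(\hat x)\neq0$ then $\psi(x,\hat x)\in F(x)\cap\neg S(\hat x)$, and otherwise $\psi(x,\hat x)\in S(x)\cap\neg F(\hat x)$. The teacher class is $\mathcal{T}=\bigcup_{(\mathcal{S},q)\in\mathcal{L}}\mathcal{T}_{\mathcal{S},q}$. *)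

(* Defs.v *)
From Stdlib Require List.
From mathcomp Require Import all_boot.

Set Implicit Arguments.
Unset Strict Implicit.
Unset Printing Implicit Defensive.

(* The null symbol "bot" is modelled by [None] of an option type.     *)

Definition feature (X : Type) := X -> bool.

Definition negf (X : Type) (phi : feature X) : feature X := fun z => ~~ phi z.

Definition teacher (X Y : Type) := ((X -> Y) * (X -> X -> option (feature X)))%type.

Definition is_teacher (X Y : Type) (Phi : feature X -> Prop) (T : teacher X Y) :=
  forall x xh, T.1 x <> T.1 xh ->
    exists phi, T.2 x xh = Some phi /\ Phi phi /\ phi x = true /\ phi xh = false.

Definition consistent_with (X Y : Type) (T : teacher X Y) (H : X * Y -> Prop) :=
  forall x y, H (x, y) -> T.1 x = y.

Definition class_consistent (X Y : Type) (TC : teacher X Y -> Prop)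
    (H : X * Y -> Prop) :=
  exists T, TC T /\ consistent_with T H.

(* DFF trees: node <y, phi, x>, children with edge labels (xh, yh).     *)

Inductive dfftree (X Y F : Type) : Type :=
  DNode : option Y -> option F -> option X ->
          seq ((X * Y) * dfftree X Y F) -> dfftree X Y F.

Arguments DNode {X Y F}.

Definition node_y (X Y F : Type) (t : dfftree X Y F) : option Y :=
  let: DNode y _ _ _ := t in y.
Definition node_f (X Y F : Type) (t : dfftree X Y F) : option F :=
  let: DNode _ f _ _ := t in f.

(* the labelled example (x, y) contributed by the parent-child pair
   parent <_,_,x> --> child <y,_,_> *)
Definition new_example (X Y F : Type) (x : option X) (c : dfftree X Y F)
  : seq (X * Y) :=
  match x, node_y c with
  | Some x', Some y' => [:: (x', y')]
  | _, _ => [::]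
  end.

(* [dff_ok H E inc t]: the subtree t, whose incoming edge label is [inc]
   ([None] for the root) and such that E are the labelled examples on the
   path from the root to t, satisfies the DFF-tree axioms together with
   the shattering conditions (1) and (2). *)
Inductive dff_ok (X Y F : Type) (H : X * Y -> Prop)
  : seq (X * Y) -> option (X * Y) -> dfftree X Y F -> Prop :=
| dff_ok_node : forall E inc y f x ch,
    (x = None <-> ch = [::]) ->
    (match inc with
     | None => y = None /\ f = None
     | Some (xh, yh) => (y <> Some yh -> f <> None)
                        /\ y <> Some yh
     end) ->
    (ch <> [::] ->
      forall p, (exists c, List.In (p, c) ch) <-> (H p \/ List.In p E)) ->
    (forall p c, List.In (p, c) ch -> dff_ok H (E ++ new_example x c) (Some p) c) ->
    dff_ok H E inc (DNode y f x ch).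

(* a root-to-leaf path, recorded as the list of its parent-child pairs:
   (x of parent, edge label (xh,yh), y of child, phi of child) *)
Definition step (X Y F : Type) :=
  (option X * (X * Y) * option Y * option F)%type.

Inductive rl_path (X Y F : Type) : dfftree X Y F -> seq (step X Y F) -> Prop :=
| rl_leaf : forall y f x, rl_path (DNode y f x [::]) [::]
| rl_step : forall y f x ch p c s,
    List.In (p, c) ch -> rl_path c s ->
    rl_path (DNode y f x ch) ((x, p, node_y c, node_f c) :: s).

Definition step_consistent (X Y : Type) (T : teacher X Y)
    (st : step X Y (feature X)) : Prop :=
  let: (px, (xh, yh), y, f) := st in
  exists x, px = Some x /\ y = Some (T.1 x) /\ (y <> Some yh -> T.2 x xh = f).

Definition path_consistent (X Y : Type) (T : teacher X Y)
    (s : seq (step X Y (feature X))) : Prop :=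
  forall st, List.In st s -> step_consistent T st.

Definition has_height (X Y F : Type) (t : dfftree X Y F) (h : nat) : Prop :=
  forall s, rl_path t s -> size s = h.

Definition shattered (X Y : Type) (TC : teacher X Y -> Prop)
    (H : X * Y -> Prop) (t : dfftree X Y (feature X)) : Prop :=
  dff_ok H [::] None t /\
  (forall s, rl_path t s ->
     exists T, TC T /\ consistent_with T H /\ path_consistent T s) /\
  (exists h, has_height t h).

(* Relaxed component model, Y = {0,...,L} = 'I_L.+1,                    *)

Definition sat (X : Type) (s : seq (feature X)) (x : X) : bool :=
  all (fun phi => phi x) s.

Definition lSq (X : Type) (L R : nat) (S : 'I_R -> seq (feature X))
    (q : 'I_R -> 'I_L.+1) (x : X) : 'I_L.+1 :=
  if [pick j | sat (S j) x] is Some j then q j else ord0.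

Definition in_Lset (X : Type) (Phi : feature X -> Prop) (L R M : nat)
    (S : 'I_R -> seq (feature X)) (q : 'I_R -> 'I_L.+1) : Prop :=
  (forall j, size (S j) <= M /\ forall phi, List.In phi (S j) -> Phi phi) /\
  (forall j, 0 < q j) /\
  (forall x j j', sat (S j) x -> sat (S j') x -> q j = q j').

Definition in_TSq (X : Type) (Phi : feature X -> Prop) (L R : nat)
    (S : 'I_R -> seq (feature X)) (q : 'I_R -> 'I_L.+1)
    (T : teacher X 'I_L.+1) : Prop :=
  is_teacher Phi T /\
  (forall x, T.1 x = lSq S q x) /\
  exists Sx : X -> seq (feature X),
    (forall x, T.1 x <> ord0 ->
       exists j, Sx x = S j /\ sat (S j) x /\ q j = T.1 x) /\
    (forall x xh, T.1 x <> T.1 xh ->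
       (T.1 xh <> ord0 ->
          exists phi, T.2 x xh = Some phi /\
            (Phi phi /\ phi x = true) /\
            (exists phi', List.In phi' (Sx xh) /\ phi = negf phi')) /\
       (T.1 xh = ord0 ->
          exists phi, T.2 x xh = Some phi /\
            List.In phi (Sx x) /\
            (exists phi', (Phi phi' /\ phi' xh = true) /\ phi = negf phi'))).

Definition relaxed_class (X : Type) (Phi : feature X -> Prop) (L R M : nat)
    (T : teacher X 'I_L.+1) : Prop :=
  exists (S : 'I_R -> seq (feature X)) (q : 'I_R -> 'I_L.+1),
    in_Lset Phi M S q /\ in_TSq Phi S q T.
Arguments relaxed_class {X} Phi L R M T.

(* Main.v *)
Require Import Defs.
From Stdlib Require List FunctionalExtensionality.
From mathcomp Require Import all_boot zify.

Set Implicit Arguments.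
Unset Strict Implicit.
Unset Printing Implicit Defensive.

Lemma size_len (A : Type) (s : seq A) : size s = length s.
Proof. by elim: s => //= ? ? ->. Qed.

Lemma negfK (X : Type) (phi : feature X) : negf (negf phi) = phi.
Proof. apply: FunctionalExtensionality.functional_extensionality => z. by rewrite /negf negbK. Qed.

Lemma sumn_set_nth (A : Type) (f : A -> nat) (d : A) (st : seq A) i p :
  i < size st ->
  sumn (map f (set_nth d st i p)) + f (nth d st i) = sumn (map f st) + f p.
Proof.
elim: st i => [|a st IH] [|i] //= Hi.
  lia.
rewrite -addnA IH //; lia.
Qed.

Lemma size_uniq_ord R (js : seq 'I_R) : uniq js -> size js <= R.
Proof.
move=> U. rewrite -(card_uniqP U). have := max_card (mem js). by rewrite card_ord.
Qed.

Lemma satP (X : Type) (s : seq (feature X)) x :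
  sat s x <-> (forall phi, List.In phi s -> phi x).
Proof.
elim: s => [|a s IH] /=; first by split.
rewrite /sat /=; split.
  move/andP=> [Ha Hs] phi [<-|Hin] //. by apply (proj1 IH).
move=> H; apply/andP; split; first by apply H; left.
apply (proj2 IH) => phi Hp; apply H; by right.
Qed.

Lemma sat_incl (X : Type) (C D : seq (feature X)) x :
  List.incl C D -> sat D x -> sat C x.
Proof.
move=> HI /satP HD. apply/satP => phi Hphi. by apply HD, HI.
Qed.

Section Main.
Variables (X : Type) (L R M : nat) (Phi : feature X -> Prop) (x0 : X).

Definition Hh := fun p : X * 'I_L.+1 => p = (x0, (ord0 : 'I_L.+1)).
Definition proto := (X * 'I_L.+1 * seq (feature X))%type.
Definition d0 : proto := (x0, ord0, [::]).
Definition meas (st : seq proto) := sumn (map (fun p : proto => size p.2) st).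

Definition props (T : teacher X 'I_L.+1) (S : 'I_R -> seq (feature X))
  (Sx : X -> seq (feature X)) (p : proto) (j : 'I_R) :=
  T.1 p.1.1 = p.1.2 /\ p.1.2 <> ord0 /\ Sx p.1.1 = S j /\ List.NoDup p.2 /\
  List.incl p.2 (S j).

Definition Inv T S Sx (st : seq proto) :=
  exists js : seq 'I_R, size js = size st /\ uniq js /\
    forall k j0, k < size st -> props T S Sx (nth d0 st k) (nth j0 js k).

Definition P1 (S : 'I_R -> seq (feature X)) (q : 'I_R -> 'I_L.+1)
  (T : teacher X 'I_L.+1) Sx :=
    (forall x, T.1 x <> ord0 ->
       exists j, Sx x = S j /\ sat (S j) x /\ q j = T.1 x).

Definition P2 (T : teacher X 'I_L.+1) (Sx : X -> seq (feature X)) :=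
    (forall x xh, T.1 x <> T.1 xh ->
       (T.1 xh <> ord0 ->
          exists phi, T.2 x xh = Some phi /\
            (Phi phi /\ phi x = true) /\
            (exists phi', List.In phi' (Sx xh) /\ phi = negf phi')) /\
       (T.1 xh = ord0 ->
          exists phi, T.2 x xh = Some phi /\
            List.In phi (Sx x) /\
            (exists phi', (Phi phi' /\ phi' xh = true) /\ phi = negf phi'))).

Definition Good (st : seq proto) (s : seq (step X 'I_L.+1 (feature X))) :=
  forall T S q Sx, in_Lset Phi M S q -> P1 S q T Sx -> P2 T Sx ->
    T.1 x0 = ord0 -> path_consistent T s -> Inv T S Sx st ->
    size s + meas st <= R * M.

Lemma meas_bound st : (forall k, k < size st -> size (nth d0 st k).2 <= M) ->
  meas st <= size st * M.
Proof.
elim: st => [|a st IH] //= H.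
have := H 0 erefl. rewrite /= => Ha.
have := IH (fun k Hk => H k.+1 Hk). rewrite mulSn /meas /=. lia.
Qed.

Lemma leaf_bound T S (q : 'I_R -> 'I_L.+1) Sx st : in_Lset Phi M S q -> Inv T S Sx st -> meas st <= R * M.
Proof.
move=> [HS _] [js [Hsz [Hu Hp]]].
apply: leq_trans (meas_bound _) _.
  move=> k Hk. have : k < size js by rewrite Hsz.
  case: js Hsz Hu Hp => // j0 js' Hsz Hu Hp _.
  have [_ [_ [_ [HN HI]]]] := Hp k j0 Hk.
  rewrite size_len. apply: leq_trans; first by apply/leP; apply: List.NoDup_incl_length HN HI.
  rewrite -size_len. exact: (HS _).1.
rewrite -Hsz leq_mul2r. by rewrite size_uniq_ord // orbT.
Qed.

Lemma child_y E p (c : dfftree X 'I_L.+1 (feature X)) : dff_ok Hh E (Some p) c -> node_y c <> Some p.2.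
Proof. case: p => xh yh Hd. inversion Hd; subst. by case: H0. Qed.


Lemma key E1 inc1 (t1 : dfftree X 'I_L.+1 (feature X)) : dff_ok Hh E1 inc1 t1 ->
  forall st, (forall k, k < size st -> List.In (nth d0 st k).1 E1) ->
  exists s, rl_path t1 s /\ Good st s.
Proof.
elim=> {E1 inc1 t1} E inc y f x ch Hleaf _ H2 Hch IH st Hst.
case: ch Hleaf H2 Hch IH => [|[p0 c0] ch'] Hleaf H2 Hch IH.
  exists [::]; split; first by constructor.
  move=> T S q Sx HL _ _ _ _ HI /=. exact: leaf_bound HL HI.
case: x Hleaf Hch IH => [xv|] Hleaf Hch IH; last by have := (proj1 Hleaf erefl).
have Hex p : Hh p \/ List.In p E -> exists c, List.In (p, c) ((p0,c0)::ch').
  by move=> Hp; apply (H2 ltac:(discriminate) p).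
case: (boolP (has (fun p : proto => sat p.2 xv) st)) => Hm.
- set i := find (fun p : proto => sat p.2 xv) st.
  have Hi : i < size st by rewrite -has_find.
  have Hsat := nth_find d0 Hm. rewrite -/i in Hsat.
  have HstI := Hst i Hi.
  case Hpi: (nth d0 st i) Hsat HstI => [[xi yi] Ci] /= Hsat HstI.
  have [c Hc] := Hex (xi, yi) (or_intror HstI).
  set st' := match node_f c with
             | Some phi => set_nth d0 st i (xi, yi, Ci ++ [:: negf phi])
             | None => st end.
  have Hst' : forall k, k < size st' -> List.In (nth d0 st' k).1 (E ++ new_example (Some xv) c).
    move=> k; rewrite /st'; case: (node_f c) => [phi|] Hk; apply List.in_or_app; left.
    + rewrite nth_set_nth /=. move: Hk; rewrite size_set_nth (maxn_idPr Hi) => Hk.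
      case: ifP => _ //=. exact: Hst Hk.
    + exact: Hst.
  have [s' [Hs' Hg']] := IH _ _ Hc st' Hst'.
  exists ((Some xv, (xi, yi), node_y c, node_f c) :: s'); split; first by constructor.
  move=> T S q Sx HL HP1 HP2 HT0 Hpc HI.
  have Hpc' : path_consistent T s' by move=> st0 Hin; apply Hpc; right.
  have := Hpc _ (or_introl erefl).
  move=> [x' [[<-] [Hy Hf]]].
  have Hny : node_y c <> Some yi := child_y (Hch _ _ Hc).
  have Hf' := Hf Hny.
  case: HI => js [Hsz [Hu Hp]].
  have [j0 _] : exists j0 : 'I_R, True.
    case: js Hsz {Hu Hp} => [|j js'] /= Hsz; last by exists j.
    by move: Hi; rewrite -Hsz.
  have := Hp i j0 Hi. rewrite Hpi /=. move=> [Hxi [Hyi0 [HSx [HND HInc]]]].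
  have Hneq : T.1 xv <> T.1 xi by rewrite Hxi => E0; apply Hny; rewrite Hy E0.
  have [phi [HT2 [[HPhi Hphix] [phi' [Hphi' Hphieq]]]]] := (HP2 xv xi Hneq).1 ltac:(by rewrite Hxi).
  have Hnf : node_f c = Some phi by rewrite -Hf' HT2.
  have Hst'E : st' = set_nth d0 st i (xi, yi, Ci ++ [:: phi']).
    by rewrite /st' Hnf Hphieq negfK.
  have Hphi'x : phi' xv = false by move: Hphix; rewrite Hphieq /negf; case: (phi' xv).
  have := Hg' T S q Sx HL HP1 HP2 HT0 Hpc'.
  have Hms : meas st' = (meas st).+1.
    have := sumn_set_nth (fun p : proto => size p.2) d0 (xi, yi, Ci ++ [:: phi']) Hi.
    rewrite -Hst'E Hpi /= size_cat /= /meas. lia.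
  rewrite Hms /= => G. rewrite addSnnS. apply: G.
  exists js; split; first by rewrite Hst'E size_set_nth (maxn_idPr Hi).
  split=> // k j1 Hk.
  move: Hk; rewrite Hst'E size_set_nth (maxn_idPr Hi) nth_set_nth /= => Hk.
  case: ifP => [/eqP -> | _]; last exact: Hp.
  have := Hp i j1 Hi. rewrite Hpi /=. move=> [_ [_ [HSx1 [_ HInc1]]]].
  split=> //; split=> //; split=> //; split.
    apply List.NoDup_app => //; first by constructor; [by [] | constructor].
    move=> a Ha [Ea|//]; subst a.
    have := (proj1 (satP _ _) Hsat) _ Ha. by rewrite Hphi'x.
  apply List.incl_app => //. move=> a [<-|//]. by rewrite -HSx1.
- have [c Hc] := Hex (x0, ord0) (or_introl erefl).
  set st' := match node_y c, node_f c with
             | Some yc, Some phi => rcons st (xv, yc, [:: phi])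
             | _, _ => st end.
  have Hst' : forall k, k < size st' -> List.In (nth d0 st' k).1 (E ++ new_example (Some xv) c).
    move=> k; rewrite /st' /new_example.
    case: (node_y c) => [yc|]; last by move=> Hk; apply List.in_or_app; left; apply: Hst.
    case: (node_f c) => [phi|]; last by move=> Hk; apply List.in_or_app; left; apply: Hst.
    rewrite size_rcons nth_rcons => Hk. case: ifP => Hk2.
      apply List.in_or_app; left; exact: Hst.
    have -> : k == size st by rewrite eqn_leq -ltnS Hk leqNgt Hk2.
    apply List.in_or_app; right; by left.
  have [s' [Hs' Hg']] := IH _ _ Hc st' Hst'.
  exists ((Some xv, (x0, ord0), node_y c, node_f c) :: s'); split; first by constructor.
  move=> T S q Sx HL HP1 HP2 HT0 Hpc HI.
  have Hpc' : path_consistent T s' by move=> st0 Hin; apply Hpc; right.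
  have := Hpc _ (or_introl erefl).
  move=> [x' [[<-] [Hy Hf]]].
  have Hny : node_y c <> Some ord0 := child_y (Hch _ _ Hc).
  have Hf' := Hf Hny.
  have Hnz : T.1 xv <> ord0 by move=> E0; apply Hny; rewrite Hy E0.
  have Hneq : T.1 xv <> T.1 x0 by rewrite HT0.
  have [phi [HT2 [Hphi _]]] := (HP2 xv x0 Hneq).2 HT0.
  have [j [HSx [HsatS _]]] := HP1 xv Hnz.
  have Hnf : node_f c = Some phi by rewrite -Hf' HT2.
  have Hst'E : st' = rcons st (xv, T.1 xv, [:: phi]) by rewrite /st' Hnf Hy.
  case: HI => js [Hsz [Hu Hp]].
  have := Hg' T S q Sx HL HP1 HP2 HT0 Hpc'.
  have Hms : meas st' = (meas st).+1.
    by rewrite Hst'E /meas map_rcons sumn_rcons addn1.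
  rewrite Hms /= => G. rewrite addSnnS. apply: G.
  exists (rcons js j); split; first by rewrite Hst'E !size_rcons Hsz.
  split.
    rewrite rcons_uniq Hu andbT. apply/negP => Hj.
    have Hk : index j js < size st by rewrite -Hsz index_mem.
    have := Hp _ j Hk. rewrite nth_index // => -[_ [_ [HSk [_ HInc]]]].
    move/negP: Hm; apply. apply/(has_nthP d0). exists (index j js) => //.
    exact: sat_incl HInc HsatS.
  move=> k j1; rewrite Hst'E size_rcons !nth_rcons Hsz => Hk.
  case: ifP => Hk2; first exact: Hp.
  have -> : k == size st by rewrite eqn_leq -ltnS Hk leqNgt Hk2.
  split=> //; split=> //; split=> //; split.
    by constructor; [by [] | constructor].
  move=> a [<-|//]. by rewrite -HSx.
Qed.

End Main.

Theorem mainTheorem5 (L R M : nat) (X : Type) (Phi : feature X -> Prop)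
  (HPhi : forall phi, Phi phi -> Phi (negf phi))
  (x0 : X)
  (Hcons : class_consistent (relaxed_class Phi L R M)
             (fun p => p = (x0, (ord0 : 'I_L.+1)))) :
  forall (t : dfftree X 'I_L.+1 (feature X)) (h : nat),
    shattered (relaxed_class Phi L R M) (fun p => p = (x0, (ord0 : 'I_L.+1))) t ->
    has_height t h ->
    h <= R * M.
Proof.
move=> t h [Hok [Hpath _]] Hh'.
have [s [Hs Hg]] := @key X L R M Phi x0 [::] None t Hok [::] (fun k Hk => ltac:(by [])).
have [T [[S [q [HL [_ [_ [Sx [HP1 HP2]]]]]]] [Hcw Hpc]]] := Hpath s Hs.
rewrite -(Hh' s Hs).
have := Hg T S q Sx HL HP1 HP2 (Hcw _ _ erefl) Hpc.
rewrite /meas /= addn0. apply.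
by exists [::].
Qed.
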